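(* Let $(\lambda_n)_{n\in\mathbb{N}_0}$ be real numbers with $\limsup_{n\to\infty}|\lambda_n|/n\le\beta$ for some $\beta>0$. Let $\gamma>0$, $f\in C^\infty[x_0,x_0+\gamma]$, and suppose there are constants $C>0$, $\sigma>0$ with $|D^{(2n)}f(t)|\le C(2n)!\sigma^{2n}$ for all $t\in[x_0,x_0+\gamma]$ and all $n\in\mathbb{N}_0$. Then for every $\varepsilon>0$ there exist constants $C_2>0$ and $\delta\in(0,\gamma)$ such that $$|D^{(2n+1)}f(t)|\le C_2(2n+1)!(\sigma+\varepsilon)^{2n+1}$$ for all $t\in[x_0,x_0+\delta]$ and all $n\in\mathbb{N}_0$.
   Context: For a sequence $(\lambda_n)$ and a smooth function $f$, $D^{(n)}f=(\frac{d}{dt}-\lambda_0)\cdots(\frac{d}{dt}-\lambda_{n-1})f$ with $D^{(0)}f=f$ (one-sided derivatives at endpoints). $f$ may be complex-valued. *)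

(* Defs.v *)
From Stdlib Require Import Reals Lra Lia.
Open Scope R_scope.

Definition has_deriv_on (a b : R) (g g' : R -> R) : Prop :=
  forall t, a <= t <= b ->
    forall eps, 0 < eps -> exists d, 0 < d /\
      forall s, a <= s <= b -> s <> t -> Rabs (s - t) < d ->
        Rabs ((g s - g t) / (s - t) - g' t) < eps.

(* F is the sequence of successive derivatives F k = g^(k) of a C^infty
   function g = F 0 on [a,b]. *)
Definition derivs_on (a b : R) (F : nat -> R -> R) : Prop :=
  forall k, has_deriv_on a b (F k) (F (S k)).

(* Coefficients of prod_{i<n} (X - lam i) : c n k is the coeff of X^k. *)
Fixpoint Dcoef (lam : nat -> R) (n k : nat) : R :=
  match n with
  | O => match k with O => 1 | S _ => 0 end
  | S m => match k with
           | O => - lam m * Dcoef lam m O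
           | S k' => Dcoef lam m k' - lam m * Dcoef lam m k
           end
  end.

(* D^(n) f = (d/dt - lam 0) ... (d/dt - lam (n-1)) f, expressed through the
   derivatives F k = f^(k):  sum_{k=0}^n c n k * f^(k). *)
Definition Dop (lam : nat -> R) (F : nat -> R -> R) (n : nat) (t : R) : R :=
  sum_f_R0 (fun k => Dcoef lam n k * F k t) n.

Definition cmod (x y : R) : R := sqrt (x ^ 2 + y ^ 2).

(* Main.v *)
Require Import Defs.
From Stdlib Require Import Reals Factorial Lra Lia.
Open Scope R_scope.

Lemma hd_plus a b f f' g g' : has_deriv_on a b f f' -> has_deriv_on a b g g' ->
  has_deriv_on a b (fun x => f x + g x) (fun x => f' x + g' x).
Proof.
  intros Hf Hg t Ht eps He.
  destruct (Hf t Ht (eps/2) ltac:(lra)) as [d1 [Hd1 H1]].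
  destruct (Hg t Ht (eps/2) ltac:(lra)) as [d2 [Hd2 H2]].
  exists (Rmin d1 d2); split; [apply Rmin_pos; lra|].
  intros s Hs Hst Hsd.
  assert (A1 := H1 s Hs Hst (Rlt_le_trans _ _ _ Hsd (Rmin_l _ _))).
  assert (A2 := H2 s Hs Hst (Rlt_le_trans _ _ _ Hsd (Rmin_r _ _))).
  assert (E : (f s + g s - (f t + g t)) / (s - t) - (f' t + g' t) =
    ((f s - f t) / (s - t) - f' t) + ((g s - g t) / (s - t) - g' t)).
  { field. intro; apply Hst; lra. }
  rewrite E. eapply Rle_lt_trans; [apply Rabs_triang|]. lra.
Qed.

Lemma hd_scal a b c f f' : has_deriv_on a b f f' ->
  has_deriv_on a b (fun x => c * f x) (fun x => c * f' x).
Proof.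
  intros Hf t Ht eps He.
  destruct (Hf t Ht (eps/(Rabs c + 1))) as [d [Hd H1]].
  { apply Rdiv_lt_0_compat; [lra|]. pose proof (Rabs_pos c); lra. }
  exists d; split; [lra|].
  intros s Hs Hst Hsd.
  assert (A := H1 s Hs Hst Hsd).
  assert (E : (c * f s - c * f t) / (s - t) - c * f' t =
    c * ((f s - f t) / (s - t) - f' t)).
  { field. intro; apply Hst; lra. }
  rewrite E, Rabs_mult.
  pose proof (Rabs_pos c).
  pose proof (Rabs_pos ((f s - f t) / (s - t) - f' t)).
  assert (eps / (Rabs c + 1) * (Rabs c + 1) = eps) by (field; lra).
  nra.
Qed.

Lemma hd_sum a b (F F' : nat -> R -> R) N :
  (forall k, has_deriv_on a b (F k) (F' k)) ->
  has_deriv_on a b (fun x => sum_f_R0 (fun k => F k x) N)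
                   (fun x => sum_f_R0 (fun k => F' k x) N).
Proof.
  intros H; induction N as [|N IH]; simpl; [apply H|].
  apply (hd_plus _ _ _ _ _ _ IH (H (S N))).
Qed.

Lemma Dcoef_zero lam n k : (n < k)%nat -> Dcoef lam n k = 0.
Proof.
  revert k; induction n as [|n IH]; intros k Hk.
  - destruct k; [lia|reflexivity].
  - destruct k; [lia|]. simpl. rewrite (IH k), (IH (S k)) by lia. ring.
Qed.

Lemma Dop_deriv a b lam F n : derivs_on a b F ->
  has_deriv_on a b (Dop lam F n)
    (fun t => sum_f_R0 (fun k => Dcoef lam n k * F (S k) t) n).
Proof.
  intros HF. unfold Dop.
  apply (hd_sum a b (fun k x => Dcoef lam n k * F k x)
                    (fun k x => Dcoef lam n k * F (S k) x)).
  intros k; apply hd_scal, HF.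
Qed.

Lemma Dop_pad lam F n t :
  Dop lam F n t = Dcoef lam n 0 * F 0%nat t +
     sum_f_R0 (fun i => Dcoef lam n (S i) * F (S i) t) n.
Proof.
  unfold Dop.
  replace (sum_f_R0 (fun k => Dcoef lam n k * F k t) n) with
    (sum_f_R0 (fun k => Dcoef lam n k * F k t) (S n)).
  - rewrite decomp_sum by lia. reflexivity.
  - rewrite tech5, Dcoef_zero by lia. ring.
Qed.

Lemma Dop_step lam F n t :
  Dop lam F (S n) t + lam n * Dop lam F n t =
  sum_f_R0 (fun k => Dcoef lam n k * F (S k) t) n.
Proof.
  rewrite (Dop_pad lam F n t).
  unfold Dop. rewrite decomp_sum by lia. simpl pred.
  replace (sum_f_R0 (fun i => Dcoef lam (S n) (S i) * F (S i) t) n) with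
    (sum_f_R0 (fun k => Dcoef lam n k * F (S k) t) n -
     lam n * sum_f_R0 (fun i => Dcoef lam n (S i) * F (S i) t) n).
  - simpl Dcoef at 1. ring.
  - rewrite scal_sum, <- minus_sum. apply sum_eq. intros i _. simpl. ring.
Qed.

Lemma Dop_hd a b lam F n : derivs_on a b F ->
  has_deriv_on a b (Dop lam F n)
    (fun t => Dop lam F (S n) t + lam n * Dop lam F n t).
Proof.
  intros HF t Ht. rewrite Dop_step. apply (Dop_deriv a b lam F n HF t Ht).
Qed.

Definition clamp a b s := Rmax a (Rmin b s).
Definition ext a b (g : R -> R) s := g (clamp a b s).

Lemma clamp_id a b s : a <= s <= b -> clamp a b s = s.
Proof. intros. unfold clamp. rewrite Rmin_right by lra. rewrite Rmax_right; lra. Qed.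

Lemma clamp_in a b s : a <= b -> a <= clamp a b s <= b.
Proof. intros. unfold clamp, Rmax, Rmin. repeat destruct Rle_dec; lra. Qed.

Lemma clamp_lip a b s t : a <= t <= b -> Rabs (clamp a b s - t) <= Rabs (s - t).
Proof. intros. unfold clamp, Rmax, Rmin. repeat destruct Rle_dec; split_Rabs; lra. Qed.

Lemma hd_lip a b g g' t : has_deriv_on a b g g' -> a <= t <= b ->
  exists d, 0 < d /\ forall s, a <= s <= b -> Rabs (s - t) < d ->
    Rabs (g s - g t) <= (Rabs (g' t) + 1) * Rabs (s - t).
Proof.
  intros H Ht. destruct (H t Ht 1 ltac:(lra)) as [d [Hd H1]].
  exists d; split; auto. intros s Hs Hsd.
  destruct (Req_dec s t) as [->|Hst].
  - replace (t - t) with 0 by ring. replace (g t - g t) with 0 by ring.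
    rewrite Rabs_R0. lra.
  - assert (A := H1 s Hs Hst Hsd).
    assert (E : g s - g t = ((g s - g t) / (s - t) - g' t) * (s - t) + g' t * (s - t)).
    { field. lra. }
    rewrite E. eapply Rle_trans; [apply Rabs_triang|]. rewrite !Rabs_mult.
    pose proof (Rabs_pos (s - t)). pose proof (Rabs_pos (g' t)). nra.
Qed.

Lemma ext_cont a b g g' t : a <= b -> has_deriv_on a b g g' -> a <= t <= b ->
  continuity_pt (ext a b g) t.
Proof.
  intros Hab H Ht.
  destruct (hd_lip a b g g' t H Ht) as [d [Hd Hl]].
  unfold continuity_pt, continue_in, limit1_in, limit_in. simpl. unfold R_dist.
  intros eps He.
  pose proof (Rabs_pos (g' t)).
  exists (Rmin d (eps / (Rabs (g' t) + 1))). split.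
  { apply Rmin_pos; auto. apply Rdiv_lt_0_compat; lra. }
  intros x [_ Hx]. unfold ext. rewrite (clamp_id a b t) by lra.
  pose proof (clamp_lip a b x t Ht).
  assert (Hx1 : Rabs (x - t) < d) by (eapply Rlt_le_trans; [apply Hx| apply Rmin_l]).
  assert (Hx2 : Rabs (x - t) < eps / (Rabs (g' t) + 1)) by (eapply Rlt_le_trans; [apply Hx| apply Rmin_r]).
  assert (A := Hl (clamp a b x) (clamp_in a b x Hab) ltac:(lra)).
  assert (eps / (Rabs (g' t) + 1) * (Rabs (g' t) + 1) = eps) by (field; lra).
  pose proof (Rabs_pos (clamp a b x - t)).
  nra.
Qed.

Lemma ext_der a b g g' t : has_deriv_on a b g g' -> a < t < b ->
  derivable_pt_lim (ext a b g) t (g' t).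
Proof.
  intros H Ht eps He.
  destruct (H t ltac:(lra) eps He) as [d [Hd H1]].
  assert (Hp : 0 < Rmin d (Rmin (t - a) (b - t))).
  { repeat apply Rmin_pos; lra. }
  exists (mkposreal _ Hp). simpl. intros h Hh Hhd.
  assert (h1 : Rabs h < d) by (eapply Rlt_le_trans; [apply Hhd|apply Rmin_l]).
  assert (h2 : Rabs h < Rmin (t - a) (b - t)) by (eapply Rlt_le_trans; [apply Hhd|apply Rmin_r]).
  assert (h3 : Rabs h < t - a) by (eapply Rlt_le_trans; [apply h2|apply Rmin_l]).
  assert (h4 : Rabs h < b - t) by (eapply Rlt_le_trans; [apply h2|apply Rmin_r]).
  assert (Hin : a <= t + h <= b) by (split_Rabs; lra).
  unfold ext. rewrite !clamp_id by lra.
  assert (A := H1 (t + h) Hin ltac:(lra) ltac:(replace (t + h - t) with h by ring; exact h1)).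
  replace (t + h - t) with h in A by ring. exact A.
Qed.

Lemma my_mvt (f f' : R -> R) p q : p < q ->
  (forall c, p < c < q -> derivable_pt_lim f c (f' c)) ->
  (forall c, p <= c <= q -> continuity_pt f c) ->
  exists c, p < c < q /\ f q - f p = f' c * (q - p).
Proof.
  intros Hpq Hd Hc.
  assert (pr1 : forall c, p < c < q -> derivable_pt f c).
  { intros c Hc'. exists (f' c). apply Hd, Hc'. }
  destruct (MVT f id p q pr1 (fun c _ => derivable_pt_id c) Hpq Hc
     (fun c _ => derivable_continuous_pt _ _ (derivable_pt_id c))) as [c [P E]].
  exists c; split; auto.
  rewrite derive_pt_id in E. rewrite (derive_pt_eq_0 _ _ _ _ (Hd c P)) in E.
  unfold id in E. lra.
Qed.

Lemma exp_le a b : a <= b -> exp a <= exp b.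
Proof. intros [H|H]; [left; apply exp_increasing; auto|rewrite H; lra]. Qed.

Lemma dlin k t0 x : derivable_pt_lim (fun s => k * (s - t0)) x k.
Proof.
  intros eps He. exists (mkposreal _ He). intros h Hh _.
  replace ((k * (x + h - t0) - k * (x - t0)) / h - k) with 0 by (field; auto).
  rewrite Rabs_R0; auto.
Qed.

Lemma dexp k t0 x : derivable_pt_lim (fun s => exp (k * (s - t0))) x (exp (k * (x - t0)) * k).
Proof.
  apply (derivable_pt_lim_comp (fun s => k * (s - t0)) exp x k).
  - apply dlin.
  - apply derivable_pt_lim_exp.
Qed.

Lemma dprod k t0 (g : R -> R) g' x : derivable_pt_lim g x g' ->
  derivable_pt_lim (fun s => exp (k * (s - t0)) * g s) x (exp (k * (x - t0)) * (k * g x + g')).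
Proof.
  intros H.
  replace (exp (k * (x - t0)) * (k * g x + g')) with
     ((exp (k * (x - t0)) * k) * g x + exp (k * (x - t0)) * g') by ring.
  apply (derivable_pt_lim_mult (fun s => exp (k * (s - t0))) g x); auto.
  apply dexp.
Qed.

Lemma cprod k t0 (g : R -> R) x : continuity_pt g x ->
  continuity_pt (fun s => exp (k * (s - t0)) * g s) x.
Proof.
  intros H. apply (continuity_pt_mult (fun s => exp (k * (s - t0))) g x); auto.
  apply derivable_continuous_pt. exists (exp (k * (x - t0)) * k). apply dexp.
Qed.

Lemma neg_abs x : - x <= Rabs x.
Proof. split_Rabs; lra. Qed.

Lemma key lo hi g u w a b t h B W :
  has_deriv_on lo hi g (fun s => u s + a * g s) ->
  has_deriv_on lo hi u (fun s => w s + b * u s) ->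
  lo <= t -> 0 < h -> t + h <= hi ->
  (forall s, t <= s <= t + h -> Rabs (g s) <= B) ->
  (forall s, t <= s <= t + h -> Rabs (w s) <= W) ->
  Rabs (u t) <= exp ((Rabs a + Rabs b) * h) * (exp ((Rabs a + Rabs b) * h) + 1) * B / h
                + exp ((Rabs a + Rabs b) * h) * h * W.
Proof.
  intros Hg Hu Hlo Hh Hhi HB HW.
  assert (Hlh : lo <= hi) by lra.
  destruct (my_mvt (fun s => exp ((-a) * (s - t)) * ext lo hi g s)
                   (fun s => exp ((-a) * (s - t)) * u s) t (t + h)) as [xi [Hxi E1]].
  { lra. }
  { intros c Hc. 
    assert (D := dprod (-a) t (ext lo hi g) _ c (ext_der lo hi g _ c Hg ltac:(lra))).
    unfold ext in D at 2. rewrite clamp_id in D by lra.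
    replace (exp (- a * (c - t)) * u c) with
      (exp (- a * (c - t)) * (- a * g c + (u c + a * g c))) by ring. exact D. }
  { intros c Hc. apply cprod. apply (ext_cont lo hi g _ c Hlh Hg). lra. }
  destruct (my_mvt (fun s => exp ((-b) * (s - t)) * ext lo hi u s)
                   (fun s => exp ((-b) * (s - t)) * w s) t xi) as [eta [Heta E2]].
  { lra. }
  { intros c Hc.
    assert (D := dprod (-b) t (ext lo hi u) _ c (ext_der lo hi u _ c Hu ltac:(lra))).
    unfold ext in D at 2. rewrite clamp_id in D by lra.
    replace (exp (- b * (c - t)) * w c) with
      (exp (- b * (c - t)) * (- b * u c + (w c + b * u c))) by ring. exact D. }
  { intros c Hc. apply cprod. apply (ext_cont lo hi u _ c Hlh Hu). lra. }
  unfold ext in E1, E2. rewrite !clamp_id in E1, E2 by lra.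
  replace (t - t) with 0 in E1, E2 by ring.
  rewrite Rmult_0_r, exp_0 in E1, E2.
  replace (t + h - t) with h in E1 by ring.
  replace (t + h - t) with h in E1 by ring.
  set (E := exp ((Rabs a + Rabs b) * h)).
  set (p := xi - t) in *. set (q := eta - t) in *.
  assert (Hp : 0 < p < h) by (unfold p; lra).
  assert (Hq : 0 < q < p) by (unfold q, p; lra).
  pose proof (Rabs_pos a). pose proof (Rabs_pos b).
  pose proof (Rle_abs a). pose proof (Rle_abs b). pose proof (neg_abs a). pose proof (neg_abs b).
  assert (Ea : exp (- a * h) <= E) by (apply exp_le; nra).
  assert (Eb : exp (- b * q) <= E) by (apply exp_le; nra).
  assert (Ey : exp (a * p) * exp (- b * p) <= E) by (rewrite <- exp_plus; apply exp_le; nra).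
  assert (Hinv : exp (a * p) * exp (- b * p) * (exp (- a * p) * exp (b * p)) = 1).
  { rewrite <- !exp_plus. replace (a * p + - b * p + (- a * p + b * p)) with 0 by ring.
    apply exp_0. }
  assert (Eu : u t = exp (a * p) * exp (- b * p) * (exp (- a * h) * g (t + h) - g t) / h
                     - exp (- b * q) * p * w eta).
  { assert (Hub : exp (b * p) * exp (- b * p) = 1).
    { rewrite <- exp_plus. replace (b * p + - b * p) with 0 by ring. apply exp_0. }
    assert (Uxi : u xi = exp (b * p) * (u t + exp (- b * q) * w eta * p)).
    { replace (u t + exp (- b * q) * w eta * p) with (exp (- b * p) * u xi) by lra.
      rewrite <- Rmult_assoc, Hub. ring. }
    replace (exp (- a * h) * g (t + h) - g t) with (exp (- a * p) * u xi * h) by lra.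
    rewrite Uxi.
    replace (exp (a * p) * exp (- b * p) * (exp (- a * p) * (exp (b * p) * (u t + exp (- b * q) * w eta * p)) * h) / h)
      with ((exp (a * p) * exp (- b * p) * (exp (- a * p) * exp (b * p))) * (u t + exp (- b * q) * w eta * p)) by (field; lra).
    rewrite Hinv. ring. }
  rewrite Eu.
  pose proof (exp_pos (- b * q)). pose proof (exp_pos (-a * h)).
  assert (HE : 0 < E) by apply exp_pos.
  assert (HY : 0 < exp (a * p) * exp (- b * p)) by (apply Rmult_lt_0_compat; apply exp_pos).
  assert (Gb1 := HB (t + h) ltac:(lra)). assert (Gb0 := HB t ltac:(lra)).
  assert (Wb := HW eta ltac:(unfold q, p in *; lra)).
  assert (HA : Rabs (exp (- a * h) * g (t + h) - g t) <= E * B + B).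
  { eapply Rle_trans; [apply Rabs_triang|]. rewrite Rabs_Ropp, Rabs_mult, (Rabs_pos_eq (exp _)) by lra.
    pose proof (Rabs_pos (g (t + h))). nra. }
  eapply Rle_trans; [apply Rabs_triang|]. rewrite Rabs_Ropp.
  apply Rplus_le_compat.
  - unfold Rdiv. rewrite Rabs_mult, Rabs_mult, (Rabs_pos_eq (exp (a * p) * exp (- b * p))) by lra.
    rewrite (Rabs_pos_eq (/ h)) by (left; apply Rinv_0_lt_compat; lra).
    pose proof (Rabs_pos (exp (- a * h) * g (t + h) - g t)).
    assert (0 < / h) by (apply Rinv_0_lt_compat; lra).
    apply Rmult_le_compat_r; [lra|].
    replace (E * (E + 1) * B) with (E * (E * B + B)) by ring.
    apply Rmult_le_compat; lra.
  - rewrite !Rabs_mult, (Rabs_pos_eq (exp _)), (Rabs_pos_eq p) by lra.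
    pose proof (Rabs_pos (w eta)).
    apply Rmult_le_compat; try nra.
Qed.

Lemma sum_ge (f : nat -> R) N m : (forall i, 0 <= f i) -> (m <= N)%nat -> f m <= sum_f_R0 f N.
Proof.
  intros Hf Hm. induction N as [|N IH].
  - replace m with 0%nat by lia. simpl; lra.
  - simpl. destruct (Nat.eq_dec m (S N)) as [->|Hne].
    + assert (0 <= sum_f_R0 f N).
      { clear IH Hm. induction N; simpl; [apply Hf|]. specialize (Hf (S N)); lra. }
      lra.
    + specialize (Hf (S N)). assert (f m <= sum_f_R0 f N) by (apply IH; lia). lra.
Qed.

Lemma lam_bound (lam : nat -> R) beta : 0 < beta ->
  (forall e, 0 < e -> exists N : nat, forall n : nat, (N <= n)%nat ->
            Rabs (lam n) / INR n <= beta + e) ->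
  exists L, 0 < L /\ forall m, Rabs (lam m) <= L * (INR m + 1).
Proof.
  intros hb hl. destruct (hl 1 ltac:(lra)) as [N HN].
  set (S0 := sum_f_R0 (fun i => Rabs (lam i)) N).
  assert (HS0 : 0 <= S0).
  { apply Rle_trans with (Rabs (lam 0%nat)); [apply Rabs_pos|].
    apply (sum_ge (fun i => Rabs (lam i))); [intros; apply Rabs_pos|lia]. }
  exists (beta + 1 + S0). split; [lra|]. intros m.
  pose proof (pos_INR m).
  destruct (Compare_dec.le_lt_dec m N) as [Hm|Hm].
  - assert (Rabs (lam m) <= S0) by (apply (sum_ge (fun i => Rabs (lam i))); [intros; apply Rabs_pos|lia]).
    nra.
  - assert (Hp : 0 < INR m) by (apply lt_0_INR; lia).
    assert (A := HN m ltac:(lia)).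
    assert (Rabs (lam m) <= (beta + 1) * INR m).
    { unfold Rdiv in A. apply (Rmult_le_compat_r (INR m)) in A; [|lra].
      rewrite Rmult_assoc, Rinv_l in A by lra. lra. }
    nra.
Qed.

Lemma alg (E E0 C Fa P h k s g : R) : 0 < E <= E0 -> 0 < C -> 0 < Fa -> 0 < P -> 0 < h ->
  1 <= k -> 0 < s -> 0 < g -> / h <= 2 / g + (k + 1) * s -> h * ((k + 1) * s) <= 1 ->
  E * (E + 1) * (C * Fa * P) / h + E * h * (C * ((k + 1) * k * Fa) * (P * s ^ 2))
  <= (E0 * (E0 + 1) * C * (2 + 2 / (g * s)) + E0 * C) * (k * Fa) * (P * s).
Proof.
  intros HE HC HF HP Hh Hk Hs Hg Hi Hh2.
  set (Q := C * Fa * P).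
  assert (HQ : 0 < Q) by (unfold Q; repeat apply Rmult_lt_0_compat; lra).
  assert (T1 : E * (E + 1) * Q / h <= E0 * (E0 + 1) * Q * (2 + 2 / (g * s)) * k * s).
  { assert (A : 2 / g + (k + 1) * s <= (2 + 2 / (g * s)) * k * s).
    { assert (2 / g = 2 / (g * s) * s) by (field; lra).
      assert (0 < 2 / (g * s)) by (apply Rdiv_lt_0_compat; nra).
      rewrite H. set (X := 2 / (g * s)) in *.
      assert (0 <= X * s * (k - 1)) by (apply Rmult_le_pos; nra).
      assert (0 <= s * (k - 1)) by nra.
      nra. }
    assert (B : E * (E + 1) <= E0 * (E0 + 1)) by nra.
    unfold Rdiv. assert (0 < / h) by (apply Rinv_0_lt_compat; lra).
    apply Rle_trans with (E0 * (E0 + 1) * Q * (2 / g + (k + 1) * s)).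
    - assert (0 < E * (E + 1) * Q) by (apply Rmult_lt_0_compat; nra).
      assert (E * (E + 1) * Q <= E0 * (E0 + 1) * Q) by (apply Rmult_le_compat_r; lra).
      apply Rmult_le_compat; lra.
    - assert (0 < E0 * (E0 + 1) * Q) by nra.
      replace (E0 * (E0 + 1) * Q * (2 + 2 * / (g * s)) * k * s) with
         (E0 * (E0 + 1) * Q * ((2 + 2 / (g * s)) * k * s)) by (unfold Rdiv; ring).
      apply Rmult_le_compat_l; lra. }
  assert (T2 : E * h * (C * ((k + 1) * k * Fa) * (P * s ^ 2)) <= E0 * Q * k * s).
  { replace (E * h * (C * ((k + 1) * k * Fa) * (P * s ^ 2))) with
       ((E * Q * k * s) * (h * ((k + 1) * s))) by (unfold Q; ring).
    assert (0 < E * Q * k * s) by (repeat apply Rmult_lt_0_compat; lra).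
    apply Rle_trans with (E * Q * k * s * 1); [apply Rmult_le_compat_l; lra|].
    rewrite Rmult_1_r. repeat apply Rmult_le_compat_r; try lra. }
  replace ((E0 * (E0 + 1) * C * (2 + 2 / (g * s)) + E0 * C) * (k * Fa) * (P * s)) with
    (E0 * (E0 + 1) * Q * (2 + 2 / (g * s)) * k * s + E0 * Q * k * s) by (unfold Q; ring).
  lra.
Qed.

Lemma hbnd g k s : 0 < g -> 0 < k -> 0 < s ->
  let h := Rmin (g / 2) (/ ((k + 1) * s)) in
  0 < h /\ h <= g / 2 /\ / h <= 2 / g + (k + 1) * s /\ h * ((k + 1) * s) <= 1.
Proof.
  intros Hg Hk Hs h.
  assert (Hq : 0 < (k + 1) * s) by nra.
  assert (0 < / ((k + 1) * s)) by (apply Rinv_0_lt_compat; lra).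
  assert (Hh : 0 < h) by (unfold h; apply Rmin_pos; lra).
  assert (h <= g / 2) by apply Rmin_l.
  assert (h <= / ((k + 1) * s)) by apply Rmin_r.
  repeat split; auto.
  - unfold h, Rmin. destruct Rle_dec.
    + replace (/ (g / 2)) with (2 / g) by (field; lra). nra.
    + rewrite Rinv_inv. assert (0 < 2 / g) by (apply Rdiv_lt_0_compat; lra). lra.
  - apply (Rmult_le_compat_r ((k + 1) * s)) in H1; [|lra].
    rewrite Rinv_l in H1 by lra. exact H1.
Qed.

Lemma part lam L x0 gamma F C sigma :
  0 < L -> (forall m, Rabs (lam m) <= L * (INR m + 1)) -> 0 < gamma ->
  derivs_on x0 (x0 + gamma) F -> 0 < C -> 0 < sigma ->
  (forall n t, x0 <= t <= x0 + gamma ->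
      Rabs (Dop lam F (2 * n) t) <= C * INR (fact (2 * n)) * sigma ^ (2 * n)) ->
  forall n t, x0 <= t <= x0 + gamma / 2 ->
    Rabs (Dop lam F (2 * n + 1) t) <=
      (exp (2 * L / sigma) * (exp (2 * L / sigma) + 1) * C * (2 + 2 / (gamma * sigma))
        + exp (2 * L / sigma) * C) * INR (fact (2 * n + 1)) * sigma ^ (2 * n + 1).
Proof.
  intros HL Hlam Hg HF HC Hs Hb n t Ht.
  replace (2 * n + 1)%nat with (S (2 * n)) by lia.
  set (k := INR (S (2 * n))).
  assert (Hk : 1 <= k) by (unfold k; rewrite S_INR; pose proof (pos_INR (2 * n)); lra).
  destruct (hbnd gamma k sigma Hg ltac:(lra) Hs) as [Hh [Hh1 [Hh2 Hh3]]].
  set (h := Rmin (gamma / 2) (/ ((k + 1) * sigma))) in *.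
  set (Fa := INR (fact (2 * n))).
  set (P := sigma ^ (2 * n)).
  assert (HFa : 0 < Fa) by (apply lt_0_INR, lt_O_fact).
  assert (HP : 0 < P) by (apply pow_lt; lra).
  assert (K := key x0 (x0 + gamma) (Dop lam F (2 * n)) (Dop lam F (S (2 * n)))
     (Dop lam F (S (S (2 * n)))) (lam (2 * n)%nat) (lam (S (2 * n))) t h
     (C * Fa * P) (C * INR (fact (S (S (2 * n)))) * sigma ^ (S (S (2 * n))))
     (Dop_hd _ _ lam F (2 * n) HF) (Dop_hd _ _ lam F (S (2 * n)) HF)
     ltac:(lra) Hh ltac:(lra)).
  assert (Hb' := fun s Hs => Hb (S n) s Hs).
  replace (2 * S n)%nat with (S (S (2 * n))) in Hb' by lia.
  specialize (K (fun s Hs' => Hb n s ltac:(lra)) (fun s Hs' => Hb' s ltac:(lra))).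
  set (E := exp ((Rabs (lam (2 * n)%nat) + Rabs (lam (S (2 * n)))) * h)) in K.
  assert (HE : 0 < E <= exp (2 * L / sigma)).
  { split; [apply exp_pos|]. apply exp_le.
    assert (A1 := Hlam (2 * n)%nat). assert (A2 := Hlam (S (2 * n))).
    fold k in A2.
    assert (H : INR (2 * n) + 1 = k) by (unfold k; rewrite S_INR; ring).
    rewrite H in A1.
    assert (Hab : Rabs (lam (2 * n)%nat) + Rabs (lam (S (2 * n))) <= 2 * L * (k + 1)) by lra.
    assert (2 * L / sigma = 2 * L / sigma * 1) by ring.
    assert (0 < 2 * L / sigma) by (apply Rdiv_lt_0_compat; lra).
    apply Rle_trans with (2 * L * (k + 1) * h); [apply Rmult_le_compat_r; lra|].
    replace (2 * L * (k + 1) * h) with (2 * L / sigma * (h * ((k + 1) * sigma))) by (field; lra).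
    apply Rle_trans with (2 * L / sigma * 1); [apply Rmult_le_compat_l; lra | lra]. }
  assert (Ef1 : INR (fact (S (2 * n))) = k * Fa).
  { unfold k, Fa. replace (fact (S (2 * n))) with (S (2 * n) * fact (2 * n))%nat by reflexivity.
    apply mult_INR. }
  assert (Ef2 : INR (fact (S (S (2 * n)))) = (k + 1) * k * Fa).
  { replace (fact (S (S (2 * n)))) with (S (S (2 * n)) * fact (S (2 * n)))%nat by reflexivity.
    rewrite mult_INR, Ef1, (S_INR (S (2 * n))). fold k. ring. }
  rewrite Ef2 in K. rewrite Ef1.
  replace (sigma ^ S (S (2 * n))) with (P * sigma ^ 2) in K by (unfold P; simpl; ring).
  replace (sigma ^ S (2 * n)) with (P * sigma) by (unfold P; simpl; ring).
  eapply Rle_trans; [exact K|].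
  apply alg; lra.
Qed.

Lemma cmod_ge x y : Rabs x <= cmod x y.
Proof.
  unfold cmod. rewrite <- (sqrt_pow2 (Rabs x)) by apply Rabs_pos.
  apply sqrt_le_1_alt. rewrite pow2_abs. pose proof (pow2_ge_0 y). lra.
Qed.

Lemma cmod_ge2 x y : Rabs y <= cmod x y.
Proof.
  replace (cmod x y) with (cmod y x) by (unfold cmod; f_equal; ring). apply cmod_ge.
Qed.

Lemma cmod_le x y : cmod x y <= Rabs x + Rabs y.
Proof.
  unfold cmod. pose proof (Rabs_pos x). pose proof (Rabs_pos y).
  rewrite <- (sqrt_pow2 (Rabs x + Rabs y)) by lra.
  apply sqrt_le_1_alt. rewrite <- (pow2_abs x), <- (pow2_abs y). nra.
Qed.

Theorem mainTheorem9
  (lam : nat -> R) (beta : R) (hbeta : 0 < beta)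
  (hlim : forall e, 0 < e -> exists N : nat, forall n : nat, (N <= n)%nat ->
            Rabs (lam n) / INR n <= beta + e)
  (x0 gamma : R) (hgamma : 0 < gamma)
  (Fr Fi : nat -> R -> R)
  (hFr : derivs_on x0 (x0 + gamma) Fr)
  (hFi : derivs_on x0 (x0 + gamma) Fi)
  (C sigma : R) (hC : 0 < C) (hsigma : 0 < sigma)
  (hbound : forall (n : nat) (t : R), x0 <= t <= x0 + gamma ->
     cmod (Dop lam Fr (2 * n) t) (Dop lam Fi (2 * n) t)
       <= C * INR (fact (2 * n)) * sigma ^ (2 * n)) :
  forall eps, 0 < eps ->
    exists C2 delta, 0 < C2 /\ 0 < delta < gamma /\
      forall (n : nat) (t : R), x0 <= t <= x0 + delta ->
        cmod (Dop lam Fr (2 * n + 1) t) (Dop lam Fi (2 * n + 1) t)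
          <= C2 * INR (fact (2 * n + 1)) * (sigma + eps) ^ (2 * n + 1).
Proof.
  intros eps He.
  destruct (lam_bound lam beta hbeta hlim) as [L [HL Hlam]].
  set (E0 := exp (2 * L / sigma)).
  set (K := E0 * (E0 + 1) * C * (2 + 2 / (gamma * sigma)) + E0 * C).
  assert (HE0 : 0 < E0) by apply exp_pos.
  assert (HK : 0 < K).
  { unfold K. assert (0 < 2 / (gamma * sigma)) by (apply Rdiv_lt_0_compat; nra).
    assert (0 < E0 * (E0 + 1) * C) by (repeat apply Rmult_lt_0_compat; lra).
    assert (0 < E0 * C) by nra. nra. }
  assert (Pr := part lam L x0 gamma Fr C sigma HL Hlam hgamma hFr hC hsigma
     (fun n t Ht => Rle_trans _ _ _ (cmod_ge _ _) (hbound n t Ht))).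
  assert (Pi := part lam L x0 gamma Fi C sigma HL Hlam hgamma hFi hC hsigma
     (fun n t Ht => Rle_trans _ _ _ (cmod_ge2 _ _) (hbound n t Ht))).
  exists (2 * K), (gamma / 2). split; [lra|]. split; [lra|].
  intros n t Ht.
  fold E0 K in Pr, Pi.
  specialize (Pr n t Ht). specialize (Pi n t Ht).
  assert (Hf : 0 < INR (fact (2 * n + 1))) by (apply lt_0_INR, lt_O_fact).
  assert (Hp : sigma ^ (2 * n + 1) <= (sigma + eps) ^ (2 * n + 1)) by (apply pow_incr; lra).
  assert (0 < sigma ^ (2 * n + 1)) by (apply pow_lt; lra).
  eapply Rle_trans; [apply cmod_le|].
  apply Rle_trans with (2 * K * INR (fact (2 * n + 1)) * sigma ^ (2 * n + 1)); [lra|].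
  apply Rmult_le_compat_l; [nra | exact Hp].
Qed.
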